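(* Define \begin{align*} & \mathcal{I} = \int_{-\infty}^{+\infty} \Big\{ \frac{y\, e^{-y^{2}}}{\sqrt{\pi}\, \mathrm{erfc}(y)} - \chi_{(0,+\infty)}(y) \Big[ y^{2}+\frac{1}{2} \Big] \Big\}dy, \qquad \mathcal{I}_1 = \int_{-\infty}^{+\infty} \Big\{ \frac{e^{-y^{2}}}{\sqrt{\pi}\, \mathrm{erfc}(y)} - \chi_{(0,+\infty)}(y) \Big[ y + \frac{y}{2(1+y^{2})} \Big] \Big\}dy,\\ & \mathcal{I}_{2} = \int_{-\infty}^{+\infty} \Big\{ \frac{y^{3}e^{-y^{2}}}{\sqrt{\pi} \, \mathrm{erfc}(y)} - \chi_{(0,+\infty)}(y) \Big[ y^{4}+\frac{y^{2}}{2}-\frac{1}{2} \Big] \Big\}dy, \qquad \mathcal{I}_{3} = \int_{-\infty}^{+\infty} \Big\{ \Big( \frac{e^{-y^{2}}}{\sqrt{\pi} \, \mathrm{erfc}(y)} \Big)^{2} - \chi_{(0,+\infty)}(y) \big[ y^{2}+1 \big] \Big\} dy,\\ & \mathcal{I}_{4} = \int_{-\infty}^{+\infty} \Big\{ \Big( \frac{y \, e^{-y^{2}}}{\sqrt{\pi} \, \mathrm{erfc}(y)} \Big)^{2} - \chi_{(0,+\infty)}(y)\Big[ y^{4}+y^{2}-\frac{3}{4} \Big] \Big\} dy. \end{align*} Then $\mathcal{I}_{1} = \frac{\ln (2\sqrt{\pi})}{2}$, $\mathcal{I}_{3} = \mathcal{I}$ and $\mathcal{I}_{4} = \mathcal{I}_{2}-\mathcal{I}$.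 In particular, for any $b>0$, $\rho>0$ and any real numbers $T_1,T_2$ and $\Omega\neq0$, $$\sqrt{2}b\rho^{b}\frac{ \rho^{2b} T_{2} -5 T_{1} }{ \Omega} \mathcal{I} + \frac{10\sqrt{2} b \rho^{b}}{3} \frac{T_{1}}{\Omega} \mathcal{I}_{2} + \sqrt{2} b \rho^{2b} \frac{T_{1}}{\Omega} \Big( \frac{2}{3\rho^{b}} - \rho^{b} \frac{T_{1}}{\Omega} \Big) \mathcal{I}_{3} - \frac{10 \sqrt{2} b \rho^{b}}{3} \frac{T_{1}}{\Omega} \mathcal{I}_{4} = \sqrt{2} \,\mathcal{I} \,b\rho^{b}\Big( \rho^{2b} \frac{T_{2}}{\Omega} - \frac{T_{1}}{\Omega} - \rho^{2b} \frac{T_{1}^{2}}{\Omega^{2}} \Big).$$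
   Context: $\mathrm{erfc}(t) = \frac{2}{\sqrt{\pi}}\int_{t}^{\infty} e^{-x^{2}}dx$ and $\chi_{(0,+\infty)}$ is the indicator function of $(0,+\infty)$. (In the paper, $T_1, T_2, \Omega$ are the quantities $\mathsf{T}_1(b\rho^{2b}),\mathsf{T}_2(b\rho^{2b})$ and $e^{u_1+\dots+u_m}$; the identity holds for arbitrary values.) *)

(* Defs.v *)
From Stdlib Require Import Reals.
From Coquelicot Require Import Coquelicot.
Open Scope R_scope.

Definition erfc (t : R) : R :=
  2 / sqrt PI * RInt_gen (fun x => exp (- x ^ 2)) (at_point t) (Rbar_locally p_infty).

Definition chi_pos (y : R) : R := if Rlt_dec 0 y then 1 else 0.

Definition whole_line (f : R -> R) : Prop :=
  ex_RInt_gen f (Rbar_locally m_infty) (Rbar_locally p_infty).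
Definition int_R (f : R -> R) : R :=
  RInt_gen f (Rbar_locally m_infty) (Rbar_locally p_infty).

Definition g (y : R) : R := exp (- y ^ 2) / (sqrt PI * erfc y).

Definition fI  (y : R) : R := y * g y - chi_pos y * (y ^ 2 + 1 / 2).
Definition fI1 (y : R) : R := g y - chi_pos y * (y + y / (2 * (1 + y ^ 2))).
Definition fI2 (y : R) : R := y ^ 3 * g y - chi_pos y * (y ^ 4 + y ^ 2 / 2 - 1 / 2).
Definition fI3 (y : R) : R := (g y) ^ 2 - chi_pos y * (y ^ 2 + 1).
Definition fI4 (y : R) : R := (y * g y) ^ 2 - chi_pos y * (y ^ 4 + y ^ 2 - 3 / 4).

Definition I  : R := int_R fI.
Definition I1 : R := int_R fI1.
Definition I2 : R := int_R fI2.
Definition I3 : R := int_R fI3.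
Definition I4 : R := int_R fI4.

(* Main.v *)
Require Import Defs.
From Stdlib Require Import Reals Lra Psatz.
From Coquelicot Require Import Coquelicot.
Open Scope R_scope.

Lemma ballR (x y : R) (e : R) : ball x e y <-> Rabs (y - x) < e.
Proof. reflexivity. Qed.

Lemma lim_p (u : R -> R) l : filterlim u (Rbar_locally p_infty) (locally l) <->
  forall eps : posreal, exists M, forall x, M < x -> Rabs (u x - l) < eps.
Proof.
  rewrite filterlim_locally. split; intros H eps; apply (H eps).
Qed.

Lemma lim_m (u : R -> R) l : filterlim u (Rbar_locally m_infty) (locally l) <->
  forall eps : posreal, exists M, forall x, x < M -> Rabs (u x - l) < eps.
Proof.
  rewrite filterlim_locally. split; intros H eps; apply (H eps).
Qed.

Lemma L1p (f : R -> R) a l : (forall b, a <= b -> ex_RInt f a b) ->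
  filterlim (fun b => RInt f a b) (Rbar_locally p_infty) (locally l) ->
  is_RInt_gen f (at_point a) (Rbar_locally p_infty) l.
Proof.
  intros Hex Hl P HP.
  specialize (Hl P HP). destruct Hl as [M HM].
  apply Filter_prod with (Q := fun x => x = a) (R := fun b => Rmax a M < b).
  - reflexivity.
  - exists (Rmax a M). auto.
  - intros x y -> Hy. simpl. eexists. split.
    + apply (RInt_correct (V:=R_CompleteNormedModule) f a y), Hex. pose proof (Rmax_l a M). lra.
    + apply HM. pose proof (Rmax_r a M). lra.
Qed.

Lemma L1m (f : R -> R) a l : (forall b, b <= a -> ex_RInt f b a) ->
  filterlim (fun b => RInt f b a) (Rbar_locally m_infty) (locally l) ->
  is_RInt_gen f (Rbar_locally m_infty) (at_point a) l.
Proof.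
  intros Hex Hl P HP.
  specialize (Hl P HP). destruct Hl as [M HM].
  apply Filter_prod with (Q := fun b => b < Rmin a M) (R := fun x => x = a).
  - exists (Rmin a M). auto.
  - reflexivity.
  - intros y x Hy ->. simpl. eexists. split.
    + apply (RInt_correct (V:=R_CompleteNormedModule) f y a), Hex. pose proof (Rmin_l a M). lra.
    + apply HM. pose proof (Rmin_r a M). lra.
Qed.

Lemma cont_exRInt (f : R -> R) a b : (forall x, continuous f x) -> ex_RInt f a b.
Proof. intros H; apply (ex_RInt_continuous (V:=R_CompleteNormedModule)); intros; apply H. Qed.

Lemma exR_on (f : R -> R) a b : a <= b -> (forall z, a <= z <= b -> continuous f z) -> ex_RInt f a b.
Proof.
  intros Hab H. apply (ex_RInt_continuous (V:=R_CompleteNormedModule)).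
  intros z Hz. rewrite Rmin_left in Hz by lra. rewrite Rmax_right in Hz by lra. apply H; lra.
Qed.

Lemma cmp_p (f h : R -> R) a :
  (forall x, continuous f x) -> (forall x, a <= x -> continuous h x) ->
  (forall x, a <= x -> Rabs (f x) <= h x) ->
  (exists l, filterlim (fun b => RInt h a b) (Rbar_locally p_infty) (locally l)) ->
  exists l, filterlim (fun b => RInt f a b) (Rbar_locally p_infty) (locally l).
Proof.
  intros Cf Ch Hb Hh.
  apply (proj1 (filterlim_locally_cauchy (U := R_CompleteSpace) (F := Rbar_locally p_infty) (fun b => RInt f a b))).
  pose proof (proj2 (filterlim_locally_cauchy (U := R_CompleteSpace) (F := Rbar_locally p_infty) (fun b => RInt h a b)) Hh) as Hh2; clear Hh; rename Hh2 into Hh.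
  intros eps. destruct (Hh eps) as [P [[M HM] HP]].
  exists (fun b => Rmax a M < b). split.
  - exists (Rmax a M). auto.
  - assert (key : forall u v, Rmax a M < u -> u <= v -> Rabs (RInt f a v - RInt f a u) < eps).
    { intros u v Hu Huv.
      pose proof (Rmax_l a M). pose proof (Rmax_r a M).
      assert (E1 : RInt f a v - RInt f a u = RInt f u v).
      { rewrite <- (RInt_Chasles f a u v) by (apply cont_exRInt; auto).
        unfold plus; simpl; ring. }
      assert (E2 : RInt h a v - RInt h a u = RInt h u v).
      { rewrite <- (RInt_Chasles h a u v) by (apply exR_on; [lra| intros; apply Ch; lra]).
        unfold plus; simpl; ring. }
      rewrite E1.
      apply Rle_lt_trans with (RInt h u v).
      - eapply Rle_trans. apply abs_RInt_le; auto. apply cont_exRInt; auto.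
        apply RInt_le; auto.
        + apply cont_exRInt. intros; apply continuous_comp; auto. apply continuous_Rabs.
        + apply exR_on; [lra| intros; apply Ch; lra].
        + intros x Hx. apply Hb. lra.
      - rewrite <- E2. specialize (HP u v (HM u ltac:(lra)) (HM v ltac:(lra))).
        apply ballR in HP. eapply Rle_lt_trans; [apply Rle_abs|exact HP]. }
    intros u v Hu Hv. apply ballR.
    destruct (Rle_lt_dec u v).
    + apply key; auto.
    + rewrite Rabs_minus_sym. apply key; auto; lra.
Qed.

Lemma cmp_m (f h : R -> R) a :
  (forall x, continuous f x) -> (forall x, x <= a -> continuous h x) ->
  (forall x, x <= a -> Rabs (f x) <= h x) ->
  (exists l, filterlim (fun b => RInt h b a) (Rbar_locally m_infty) (locally l)) ->
  exists l, filterlim (fun b => RInt f b a) (Rbar_locally m_infty) (locally l).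
Proof.
  intros Cf Ch Hb Hh.
  apply (proj1 (filterlim_locally_cauchy (U := R_CompleteSpace) (F := Rbar_locally m_infty) (fun b => RInt f b a))).
  pose proof (proj2 (filterlim_locally_cauchy (U := R_CompleteSpace) (F := Rbar_locally m_infty) (fun b => RInt h b a)) Hh) as Hh2; clear Hh; rename Hh2 into Hh.
  intros eps. destruct (Hh eps) as [P [[M HM] HP]].
  exists (fun b => b < Rmin a M). split.
  - exists (Rmin a M). auto.
  - assert (key : forall u v, u < Rmin a M -> v <= u -> Rabs (RInt f v a - RInt f u a) < eps).
    { intros u v Hu Huv.
      pose proof (Rmin_l a M). pose proof (Rmin_r a M).
      assert (E1 : RInt f v a - RInt f u a = RInt f v u).
      { rewrite <- (RInt_Chasles f v u a) by (apply cont_exRInt; auto).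
        unfold plus; simpl; ring. }
      assert (E2 : RInt h v a - RInt h u a = RInt h v u).
      { rewrite <- (RInt_Chasles h v u a) by (apply exR_on; [lra| intros; apply Ch; lra]).
        unfold plus; simpl; ring. }
      rewrite E1.
      apply Rle_lt_trans with (RInt h v u).
      - eapply Rle_trans. apply abs_RInt_le; auto. apply cont_exRInt; auto.
        apply RInt_le; auto.
        + apply cont_exRInt. intros; apply continuous_comp; auto. apply continuous_Rabs.
        + apply exR_on; [lra| intros; apply Ch; lra].
        + intros x Hx. apply Hb. lra.
      - rewrite <- E2. specialize (HP u v (HM u ltac:(lra)) (HM v ltac:(lra))).
        apply ballR in HP.
        eapply Rle_lt_trans; [apply Rle_abs|exact HP]. }
    intros u v Hu Hv. apply ballR.
    destruct (Rle_lt_dec v u).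
    + apply key; auto.
    + rewrite Rabs_minus_sym. apply key; auto; lra.
Qed.

Lemma lim_plus {F : (R -> Prop) -> Prop} {FF : Filter F} (u v : R -> R) a b :
  filterlim u F (locally a) -> filterlim v F (locally b) ->
  filterlim (fun x => u x + v x) F (locally (a + b)).
Proof.
  intros Hu Hv. apply filterlim_locally. intros eps.
  pose proof (proj1 (filterlim_locally u a) Hu (mkposreal _ (is_pos_div_2 eps))) as H1.
  pose proof (proj1 (filterlim_locally v b) Hv (mkposreal _ (is_pos_div_2 eps))) as H2.
  generalize (filter_and _ _ H1 H2). apply filter_imp. intros x [h1 h2].
  change (Rabs (u x - a) < eps / 2) in h1. change (Rabs (v x - b) < eps / 2) in h2. change (Rabs (u x + v x - (a + b)) < eps).
  replace (u x + v x - (a + b)) with ((u x - a) + (v x - b)) by ring.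
  eapply Rle_lt_trans. apply Rabs_triang. lra.
Qed.

Lemma lim_scal {F : (R -> Prop) -> Prop} {FF : Filter F} (u : R -> R) a k :
  filterlim u F (locally a) -> filterlim (fun x => k * u x) F (locally (k * a)).
Proof.
  intros Hu. apply filterlim_locally. intros eps.
  assert (hp : 0 < eps / (Rabs k + 1)).
  { apply Rdiv_lt_0_compat. apply cond_pos. pose proof (Rabs_pos k). lra. }
  pose proof (proj1 (filterlim_locally u a) Hu (mkposreal _ hp)) as H1.
  generalize H1. apply filter_imp. intros x h1.
  change (Rabs (u x - a) < eps / (Rabs k + 1)) in h1. change (Rabs (k * u x - k * a) < eps).
  replace (k * u x - k * a) with (k * (u x - a)) by ring. rewrite Rabs_mult.
  pose proof (Rabs_pos k). pose proof (Rabs_pos (u x - a)). pose proof (cond_pos eps).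
  apply Rle_lt_trans with ((Rabs k + 1) * Rabs (u x - a)). nra.
  apply Rmult_lt_compat_l with (r := Rabs k + 1) in h1; [|lra].
  replace ((Rabs k + 1) * (eps / (Rabs k + 1))) with (pos eps) in h1 by (field; lra). lra.
Qed.

Lemma lim_minus {F : (R -> Prop) -> Prop} {FF : Filter F} (u v : R -> R) a b :
  filterlim u F (locally a) -> filterlim v F (locally b) ->
  filterlim (fun x => u x - v x) F (locally (a - b)).
Proof.
  intros Hu Hv. unfold Rminus.
  apply (lim_plus u (fun x => - v x)); auto.
  apply (filterlim_ext (fun x => -1 * v x)). intros; ring.
  replace (- b) with (-1 * b) by ring. apply lim_scal; auto.
Qed.

Lemma lim_ext_loc {F : (R -> Prop) -> Prop} {FF : Filter F} (u v : R -> R) a :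
  F (fun x => u x = v x) -> filterlim u F (locally a) -> filterlim v F (locally a).
Proof.
  intros He Hu. apply filterlim_locally. intros eps.
  pose proof (proj1 (filterlim_locally u a) Hu eps) as H1.
  generalize (filter_and _ _ He H1). apply filter_imp. intros x [h1 h2]. rewrite <- h1. auto.
Qed.

Lemma lim_comp_cont {F : (R -> Prop) -> Prop} {FF : Filter F} (u : R -> R) (f : R -> R) a :
  filterlim u F (locally a) -> continuous f a -> filterlim (fun x => f (u x)) F (locally (f a)).
Proof.
  intros Hu Hf. eapply filterlim_comp. apply Hu. apply Hf.
Qed.

Lemma exp_le (a b : R) : a <= b -> exp a <= exp b.
Proof. intros [H|H]. left; apply exp_increasing; auto. subst; lra. Qed.

Lemma exp_neg_sq_bound (x : R) : exp (- (x * x)) <= / (1 + x * x).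
Proof.
  rewrite exp_Ropp. apply Rinv_le_contravar. nra. apply exp_ineq1_le.
Qed.

Lemma lim0_p (u : R -> R) l : (exists M C, forall x, M < x -> Rabs (u x - l) <= C / x) ->
  filterlim u (Rbar_locally p_infty) (locally l).
Proof.
  intros [M [C H]]. apply lim_p. intros eps.
  exists (Rmax M (Rmax 1 (Rabs C / eps))). intros x Hx.
  pose proof (Rmax_l M (Rmax 1 (Rabs C / eps))).
  pose proof (Rmax_r M (Rmax 1 (Rabs C / eps))).
  pose proof (Rmax_l 1 (Rabs C / eps)). pose proof (Rmax_r 1 (Rabs C / eps)).
  pose proof (cond_pos eps).
  eapply Rle_lt_trans. apply H. lra.
  assert (0 < x) by lra.
  apply Rmult_lt_reg_r with x; auto. unfold Rdiv. rewrite Rmult_assoc, Rinv_l by lra.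
  assert (Rabs C < eps * x).
  { assert (Rabs C / eps < x) by lra.
    apply Rmult_lt_compat_l with (r := eps) in H6; auto.
    unfold Rdiv in H6. rewrite <- Rmult_assoc, (Rmult_comm eps), Rmult_assoc, Rinv_r in H6 by lra. lra. }
  pose proof (Rle_abs C). lra.
Qed.

Lemma lim0_m (u : R -> R) l : (exists M C, forall x, x < M -> Rabs (u x - l) <= C / (- x)) ->
  filterlim u (Rbar_locally m_infty) (locally l).
Proof.
  intros [M [C H]]. apply lim_m. intros eps.
  exists (- Rmax (-M) (Rmax 1 (Rabs C / eps))). intros x Hx.
  pose proof (Rmax_l (-M) (Rmax 1 (Rabs C / eps))).
  pose proof (Rmax_r (-M) (Rmax 1 (Rabs C / eps))).
  pose proof (Rmax_l 1 (Rabs C / eps)). pose proof (Rmax_r 1 (Rabs C / eps)).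
  pose proof (cond_pos eps).
  eapply Rle_lt_trans. apply H. lra.
  assert (0 < -x) by lra.
  apply Rmult_lt_reg_r with (-x); auto. unfold Rdiv. rewrite Rmult_assoc, Rinv_l by lra.
  assert (Rabs C < eps * (-x)).
  { assert (Rabs C / eps < -x) by lra.
    apply Rmult_lt_compat_l with (r := eps) in H6; auto.
    unfold Rdiv in H6. rewrite <- Rmult_assoc, (Rmult_comm eps), Rmult_assoc, Rinv_r in H6 by lra. lra. }
  pose proof (Rle_abs C). lra.
Qed.

Lemma exd_cont (f : R -> R) x : ex_derive f x -> continuous f x.
Proof. intros H. exact (ex_derive_continuous (K:=R_AbsRing) (V:=R_NormedModule) f x H). Qed.

Lemma RInt_scalR (f : R -> R) a b k : ex_RInt f a b -> RInt (fun t => k * f t) a b = k * RInt f a b.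
Proof. intros H. exact (RInt_scal (V:=R_CompleteNormedModule) f a b k H). Qed.

Lemma RInt_comp_linR (f : R -> R) u v a b : ex_RInt f (u * a + v) (u * b + v) ->
  RInt (fun y => u * f (u * y + v)) a b = RInt f (u * a + v) (u * b + v).
Proof. intros H. exact (RInt_comp_lin (V:=R_CompleteNormedModule) f u v a b H). Qed.

Definition gs (x : R) : R := exp (- x ^ 2).
Definition G (x : R) : R := RInt gs 0 x.

Lemma gs_cont x : continuous gs x.
Proof. apply exd_cont. unfold gs. auto_derive. auto. Qed.

Lemma gs_pos x : 0 < gs x.
Proof. apply exp_pos. Qed.

Lemma G_deriv (x : R) : is_derive G x (gs x).
Proof.
  apply (is_derive_RInt (V:=R_CompleteNormedModule) gs G 0 x).
  - apply filter_forall. intros b. apply (RInt_correct (V:=R_CompleteNormedModule)).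
    apply cont_exRInt, gs_cont.
  - apply gs_cont.
Qed.

Definition jf (x t : R) : R := exp (- (x * x) * (1 + t * t)) / (1 + t * t).
Definition J (x : R) : R := RInt (jf x) 0 1.

Lemma jf_D (u v : R) : Derive (fun z => jf z v) u = -2 * u * exp (- (u * u) * (1 + v * v)).
Proof.
  apply is_derive_unique. unfold jf. auto_derive.
  - nra.
  - field. nra.
Qed.

Lemma cont_exp_pt x : continuity_pt exp x.
Proof. apply derivable_continuous_pt, derivable_pt_exp. Qed.

Lemma jf_cont x t : continuous (jf x) t.
Proof. apply exd_cont. unfold jf. auto_derive. nra. Qed.

Lemma J_deriv (x : R) : is_derive J x (-2 * gs x * G x).
Proof.
  assert (H := is_derive_RInt_param jf 0 1 x).
  assert (H' : is_derive J x (RInt (fun t => Derive (fun u => jf u t) x) 0 1)).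
  { apply H.
    - apply filter_forall. intros x0 t _. unfold jf. auto_derive. nra.
    - intros t _. 
      apply continuity_2d_pt_ext with (f := fun u v => -2 * u * exp (- (u * u) * (1 + v * v))).
      { intros; rewrite jf_D; reflexivity. }
      apply continuity_2d_pt_mult.
      + apply continuity_2d_pt_mult. apply continuity_2d_pt_const. apply continuity_2d_pt_id1.
      + apply continuity_1d_2d_pt_comp with (f := exp). apply cont_exp_pt.
        apply continuity_2d_pt_mult.
        * apply continuity_2d_pt_opp. apply continuity_2d_pt_mult; apply continuity_2d_pt_id1.
        * apply continuity_2d_pt_plus. apply continuity_2d_pt_const.
          apply continuity_2d_pt_mult; apply continuity_2d_pt_id2.
    - apply filter_forall. intros y. apply cont_exRInt. apply jf_cont. }
  replace (-2 * gs x * G x) with (RInt (fun t => Derive (fun u => jf u t) x) 0 1); auto.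
  rewrite (RInt_ext _ (fun t => (-2 * gs x) * (x * gs (x * t + 0)))).
  2:{ intros t _. rewrite jf_D. unfold gs; simpl.
      replace (- (x * x) * (1 + t * t)) with (- (x * (x * 1)) + - ((x * t + 0) * ((x * t + 0) * 1))) by ring.
      rewrite exp_plus. ring. }
  rewrite (RInt_scalR (fun t => x * gs (x*t+0)) 0 1 (-2 * gs x)).
  2:{ apply cont_exRInt. intros z. apply exd_cont. unfold gs. auto_derive. auto. }
  rewrite (RInt_comp_linR gs x 0 0 1).
  2:{ apply cont_exRInt, gs_cont. }
  unfold G. replace (x * 0 + 0) with 0 by ring. replace (x * 1 + 0) with x by ring.
  reflexivity.
Qed.

Lemma G_ex x : ex_derive G x.
Proof. exists (gs x). apply G_deriv. Qed.
Lemma J_ex x : ex_derive J x.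
Proof. exists (-2 * gs x * G x). apply J_deriv. Qed.

Definition hh (x : R) : R := G x ^ 2 + J x.

Lemma hh_deriv (x : R) : is_derive hh x 0.
Proof.
  unfold hh. auto_derive.
  - split. apply G_ex. split. apply J_ex. auto.
  - replace (Derive (fun y : R => G y) x) with (gs x) by (symmetry; apply is_derive_unique; apply G_deriv). replace (Derive (fun y : R => J y) x) with (-2 * gs x * G x) by (symmetry; apply is_derive_unique; apply J_deriv). ring.
Qed.

Lemma J0 : J 0 = PI / 4.
Proof.
  unfold J. rewrite (RInt_ext _ (fun t => / (1 + t ^ 2))).
  2:{ intros t _. unfold jf. replace (- (0 * 0) * (1 + t * t)) with 0 by ring. rewrite exp_0.
      simpl. field. nra. }
  assert (H : is_RInt (fun t => / (1 + t ^ 2)) 0 1 (minus (atan 1) (atan 0))).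
  { apply (is_RInt_derive (V:=R_CompleteNormedModule) atan).
    - intros t _. apply is_derive_Reals. apply derivable_pt_lim_atan.
    - intros t _. apply exd_cont. auto_derive. nra. }
  apply (is_RInt_unique (V:=R_CompleteNormedModule)) in H. rewrite H. rewrite atan_1, atan_0. unfold minus, plus, opp; simpl. ring.
Qed.

Lemma G0 : G 0 = 0.
Proof. unfold G. rewrite RInt_point. reflexivity. Qed.

Lemma hh_const (x : R) : 0 <= x -> hh x = PI / 4.
Proof.
  intros [Hx|Hx].
  - rewrite <- (eq_is_derive hh 0 x). unfold hh. rewrite G0, J0. simpl; ring.
    intros t _. apply hh_deriv. auto.
  - subst. unfold hh. rewrite G0, J0. simpl; ring.
Qed.

Lemma J_bounds (x : R) : 0 < J x /\ J x <= exp (- (x * x)).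
Proof.
  split.
  - unfold J. apply RInt_gt_0. lra.
    intros t _. unfold jf. apply Rdiv_lt_0_compat. apply exp_pos. nra.
    intros t _. apply jf_cont.
  - unfold J. apply Rle_trans with (RInt (fun _ => exp (- (x * x))) 0 1).
    + apply RInt_le. lra. apply cont_exRInt, jf_cont. apply cont_exRInt. intros; apply continuous_const.
      intros t Ht. unfold jf.
      assert (exp (- (x * x) * (1 + t * t)) <= exp (- (x * x))) by (apply exp_le; nra).
      pose proof (exp_pos (- (x * x) * (1 + t * t))).
      apply Rle_trans with (exp (- (x * x) * (1 + t * t))); auto.
      unfold Rdiv. rewrite <- (Rmult_1_r (exp (- (x * x) * (1 + t * t)))) at 2.
      apply Rmult_le_compat_l. lra. rewrite <- Rinv_1. apply Rinv_le_contravar; nra.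
    + rewrite RInt_const. unfold scal; simpl; unfold mult; simpl. lra.
Qed.

Definition S0 : R := sqrt PI / 2.

Lemma S0_sq : S0 * S0 = PI / 4.
Proof. unfold S0. pose proof PI_RGT_0. replace (sqrt PI / 2 * (sqrt PI / 2)) with (sqrt PI * sqrt PI / 4) by field.
  rewrite sqrt_sqrt; lra. Qed.

Lemma S0_pos : 0 < S0.
Proof. unfold S0. pose proof PI_RGT_0. pose proof (sqrt_lt_R0 PI H). lra. Qed.

Lemma G_nonneg (x : R) : 0 <= x -> 0 <= G x.
Proof. intros Hx. unfold G. apply RInt_ge_0; auto. apply cont_exRInt, gs_cont. intros; left; apply gs_pos. Qed.

Lemma G_sq (x : R) : 0 <= x -> G x * G x = PI / 4 - J x.
Proof. intros Hx. pose proof (hh_const x Hx). unfold hh in H. simpl in H. lra. Qed.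

Lemma G_lt_S0_pos (x : R) : 0 <= x -> G x < S0.
Proof.
  intros Hx. pose proof (G_sq x Hx). pose proof (J_bounds x). pose proof S0_sq. pose proof S0_pos.
  pose proof (G_nonneg x Hx). nra.
Qed.

Lemma G_lim : filterlim G (Rbar_locally p_infty) (locally S0).
Proof.
  apply lim0_p. exists 0, (/ S0). intros x Hx.
  pose proof (G_sq x (Rlt_le _ _ Hx)). pose proof (J_bounds x). pose proof S0_sq. pose proof S0_pos.
  pose proof (G_nonneg x (Rlt_le _ _ Hx)). pose proof (G_lt_S0_pos x (Rlt_le _ _ Hx)).
  pose proof (exp_neg_sq_bound x).
  rewrite Rabs_left by lra.
  assert (HH : S0 - G x = J x / (S0 + G x)).
  { field_simplify_eq. nra. lra. }
  replace (-(G x - S0)) with (J x / (S0 + G x)) by (rewrite <- HH; ring).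
  apply Rle_trans with (J x / S0).
  { unfold Rdiv. apply Rmult_le_compat_l. lra. apply Rinv_le_contravar; lra. }
  apply Rle_trans with (/ (1 + x * x) / S0).
  { unfold Rdiv. apply Rmult_le_compat_r. left; apply Rinv_0_lt_compat; lra. lra. }
  replace (/ S0 / x) with (/ x / S0) by (field; lra).
  unfold Rdiv. apply Rmult_le_compat_r. left; apply Rinv_0_lt_compat; lra.
  apply Rinv_le_contravar; nra.
Qed.

Lemma G_odd (x : R) : G (- x) = - G x.
Proof.
  unfold G. rewrite <- (Rmult_0_r (-1)) at 1. replace (- x) with (-1 * x + 0) by ring.
  replace (-1 * 0) with (-1 * 0 + 0) by ring.
  rewrite <- RInt_comp_linR by (apply cont_exRInt, gs_cont).
  rewrite (RInt_ext _ (fun y => -1 * gs y)).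
  2:{ intros; unfold gs. f_equal. f_equal. f_equal. ring. }
  rewrite RInt_scalR by (apply cont_exRInt, gs_cont). ring.
Qed.

Lemma RInt_ChaslesR (f : R -> R) a b c : ex_RInt f a b -> ex_RInt f b c -> RInt f a b + RInt f b c = RInt f a c.
Proof. intros H1 H2. exact (RInt_Chasles (V:=R_CompleteNormedModule) f a b c H1 H2). Qed.

Lemma aux_uv (u v : R) : v = u + v - u. Proof. ring. Qed.

Ltac fixR := match goal with |- @eq _ ?a ?b => change (@eq R a b) end.

Definition Ef (y : R) : R := S0 - G y.

Lemma RInt_gs_diff (y b : R) : RInt gs y b = G b - G y.
Proof.
  unfold G. rewrite <- (RInt_ChaslesR gs 0 y b) by (apply cont_exRInt, gs_cont). apply aux_uv.
Qed.

Lemma RIntgen_gs (y : R) : is_RInt_gen gs (at_point y) (Rbar_locally p_infty) (Ef y).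
Proof.
  apply L1p.
  - intros; apply cont_exRInt, gs_cont.
  - apply lim_p. intros eps. destruct (proj1 (lim_p G S0) G_lim eps) as [M HM].
    exists M. intros x Hx. rewrite RInt_gs_diff. unfold Ef.
    replace (G x - G y - (S0 - G y)) with (G x - S0) by ring. auto.
Qed.

Lemma erfc_eq (y : R) : sqrt PI * erfc y = 2 * Ef y.
Proof.
  unfold erfc. change (fun x => exp (- x ^ 2)) with gs.
  rewrite (is_RInt_gen_unique gs _ (RIntgen_gs y)).
  pose proof PI_RGT_0. pose proof (sqrt_lt_R0 PI H). field. lra.
Qed.

Definition gg (y : R) : R := gs y / (2 * Ef y).

Lemma g_gg (y : R) : g y = gg y.
Proof. unfold g, gg. rewrite erfc_eq. reflexivity. Qed.

Lemma Ef_pos (y : R) : 0 < Ef y.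
Proof.
  unfold Ef. destruct (Rle_lt_dec 0 y).
  - pose proof (G_lt_S0_pos y r). lra.
  - replace y with (- (- y)) by ring. rewrite G_odd.
    pose proof (G_nonneg (- y) ltac:(lra)). pose proof S0_pos. lra.
Qed.

Lemma Ef_ge_S0 (y : R) : y <= 0 -> S0 <= Ef y.
Proof.
  intros Hy. unfold Ef. replace y with (- (- y)) by ring. rewrite G_odd.
  pose proof (G_nonneg (- y) ltac:(lra)). lra.
Qed.

Lemma Ef_deriv (y : R) : is_derive Ef y (- gs y).
Proof.
  unfold Ef. auto_derive.
  - exists (gs y). apply G_deriv.
  - replace (Derive (fun x : R => G x) y) with (gs y) by (symmetry; apply is_derive_unique; apply G_deriv). ring.
Qed.

Lemma Ef_ex (y : R) : ex_derive Ef y.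
Proof. exists (- gs y). apply Ef_deriv. Qed.

Lemma Ef_cont (y : R) : continuous Ef y.
Proof. apply exd_cont, Ef_ex. Qed.

Lemma Ef_lim_p : filterlim Ef (Rbar_locally p_infty) (locally 0).
Proof.
  apply lim_p. intros eps. destruct (proj1 (lim_p G S0) G_lim eps) as [M HM].
  exists M. intros x Hx. unfold Ef. replace (S0 - G x - 0) with (- (G x - S0)) by ring.
  rewrite Rabs_Ropp. auto.
Qed.

Lemma Ef_lim_m : filterlim Ef (Rbar_locally m_infty) (locally (2 * S0)).
Proof.
  apply lim_m. intros eps. destruct (proj1 (lim_p G S0) G_lim eps) as [M HM].
  exists (- M). intros x Hx. unfold Ef. replace x with (- (- x)) by ring. rewrite G_odd.
  replace (S0 - - G (- x) - 2 * S0) with (G (- x) - S0) by ring. apply HM. lra.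
Qed.

Lemma gg_deriv (y : R) : is_derive gg y (-2 * y * gg y + 2 * gg y ^ 2).
Proof.
  unfold gg, gs. auto_derive.
  - split. apply Ef_ex. split; auto. pose proof (Ef_pos y). lra.
  - replace (Derive (fun x : R => Ef x) y) with (- gs y) by (symmetry; apply is_derive_unique; apply Ef_deriv).
    unfold gs. pose proof (Ef_pos y). replace (y * (y * 1)) with (y ^ 2) by ring. field. lra.
Qed.

Lemma gg_ex (y : R) : ex_derive gg y.
Proof. eexists. apply gg_deriv. Qed.

Lemma gg_cont (y : R) : continuous gg y.
Proof. apply exd_cont, gg_ex. Qed.

Lemma gg_pos (y : R) : 0 < gg y.
Proof. unfold gg. pose proof (Ef_pos y). pose proof (gs_pos y). apply Rdiv_lt_0_compat; lra. Qed.

Lemma gg_left (y : R) : y <= 0 -> gg y <= gs y / (2 * S0).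
Proof.
  intros Hy. unfold gg. pose proof (Ef_ge_S0 y Hy). pose proof S0_pos. pose proof (gs_pos y).
  unfold Rdiv. apply Rmult_le_compat_l. lra. apply Rinv_le_contravar; lra.
Qed.

Lemma deriv_contpt (D : R -> R) d x : is_derive D x d -> continuity_pt D x.
Proof. intros H. apply continuity_pt_filterlim. apply exd_cont. exists d; auto. Qed.

Lemma mono_lim_p (D dD : R -> R) a : (forall x, a <= x -> is_derive D x (dD x)) ->
  (forall x, a <= x -> 0 <= dD x) -> filterlim D (Rbar_locally p_infty) (locally 0) -> D a <= 0.
Proof.
  intros Hd Hs Hl. destruct (Rle_lt_dec (D a) 0) as [h|h]; auto. exfalso.
  destruct (proj1 (lim_p D 0) Hl (mkposreal _ h)) as [M HM]. simpl in HM.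
  set (x := Rmax a M + 1).
  assert (a < x) by (unfold x; pose proof (Rmax_l a M); lra).
  assert (M < x) by (unfold x; pose proof (Rmax_r a M); lra).
  destruct (MVT_gen D a x dD) as [c [Hc Heq]].
  - intros t Ht. apply Hd. rewrite Rmin_left in Ht by lra. lra.
  - intros t Ht. rewrite Rmin_left in Ht by lra. eapply deriv_contpt. apply Hd. lra.
  - rewrite Rmin_left in Hc by lra. rewrite Rmax_right in Hc by lra.
    specialize (Hs c ltac:(lra)). specialize (HM x H0).
    assert (D x - D a >= 0) by (rewrite Heq; nra).
    rewrite Rminus_0_r in HM. pose proof (Rle_abs (D x)). lra.
Qed.

Lemma mono_lim_p' (D dD : R -> R) a : (forall x, a <= x -> is_derive D x (dD x)) ->
  (forall x, a <= x -> dD x <= 0) -> filterlim D (Rbar_locally p_infty) (locally 0) -> 0 <= D a.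
Proof.
  intros Hd Hs Hl.
  assert (- D a <= 0); [|lra].
  apply (mono_lim_p (fun x => - D x) (fun x => - dD x) a).
  - intros x Hx. apply (is_derive_opp (K:=R_AbsRing) (V:=R_NormedModule) D x (dD x)). auto.
  - intros x Hx. specialize (Hs x Hx). lra.
  - apply lim_p. intros eps. destruct (proj1 (lim_p D 0) Hl eps) as [M HM]. exists M.
    intros x Hx. specialize (HM x Hx). rewrite Rminus_0_r in *. rewrite Rabs_Ropp. auto.
Qed.

Definition qU (x : R) : R := / x / 2 - (/ x) ^ 3 / 4 + 3 * (/ x) ^ 5 / 8.
Definition qL (x : R) : R := qU x - 15 * (/ x) ^ 7 / 16.

Lemma exp_sq_bound_p (x : R) : 0 < x -> exp (- x ^ 2) <= / x.
Proof.
  intros Hx. replace (- x ^ 2) with (- (x * x)) by ring.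
  eapply Rle_trans. apply exp_neg_sq_bound. apply Rinv_le_contravar; nra.
Qed.

Lemma K_lim (q : R -> R) : (forall x, 1 <= x -> Rabs (q x) <= 2) ->
  filterlim (fun x => exp (- x ^ 2) * q x) (Rbar_locally p_infty) (locally 0).
Proof.
  intros Hq. apply lim0_p. exists 1, 2. intros x Hx.
  rewrite Rminus_0_r, Rabs_mult, Rabs_pos_eq by (left; apply exp_pos).
  pose proof (exp_sq_bound_p x ltac:(lra)). pose proof (exp_pos (- x ^ 2)).
  specialize (Hq x ltac:(lra)). pose proof (Rabs_pos (q x)).
  unfold Rdiv. rewrite Rmult_comm. apply Rmult_le_compat; lra.
Qed.

Lemma powb (s : R) n : 0 < s <= 1 -> 0 < s ^ n <= 1.
Proof. intros H. induction n; simpl. lra. nra. Qed.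

Lemma qbound (s : R) : 0 < s <= 1 -> Rabs (s / 2 - s ^ 3 / 4 + 3 * s ^ 5 / 8) <= 2 /\
   Rabs (s / 2 - s ^ 3 / 4 + 3 * s ^ 5 / 8 - 15 * s ^ 7 / 16) <= 2.
Proof.
  intros Hs. pose proof (powb s 3 Hs). pose proof (powb s 5 Hs). pose proof (powb s 7 Hs).
  split; apply Rabs_le; lra.
Qed.

Lemma qU_bound x : 1 <= x -> Rabs (qU x) <= 2.
Proof. intros Hx. unfold qU. apply qbound. split. apply Rinv_0_lt_compat; lra.
  rewrite <- Rinv_1. apply Rinv_le_contravar; lra. Qed.
Lemma qL_bound x : 1 <= x -> Rabs (qL x) <= 2.
Proof. intros Hx. unfold qL, qU. apply qbound. split. apply Rinv_0_lt_compat; lra.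
  rewrite <- Rinv_1. apply Rinv_le_contravar; lra. Qed.

Lemma Ef_upper (y : R) : 1 <= y -> Ef y <= exp (- y ^ 2) * qU y.
Proof.
  intros Hy.
  assert (Ef y - exp (- y ^ 2) * qU y <= 0); [|lra].
  apply (mono_lim_p (fun x => Ef x - exp (- x ^ 2) * qU x)
          (fun x => exp (- x ^ 2) * (15 / 8 * (/ x) ^ 6)) y).
  - intros x Hx. unfold qU. auto_derive.
    + repeat split; try (apply Ef_ex); lra.
    + replace (Derive (fun x : R => Ef x) x) with (- gs x) by (symmetry; apply is_derive_unique; apply Ef_deriv).
      unfold gs. replace (x * (x * 1)) with (x ^ 2) by ring. field. lra.
  - intros x Hx. apply Rmult_le_pos. left; apply exp_pos.
    apply Rmult_le_pos. lra. apply pow_le. left; apply Rinv_0_lt_compat; lra.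
  - replace 0 with (0 - 0) by ring. apply (lim_minus Ef (fun x => exp (- x ^ 2) * qU x)).
    apply Ef_lim_p. apply K_lim, qU_bound.
Qed.

Lemma Ef_lower (y : R) : 1 <= y -> exp (- y ^ 2) * qL y <= Ef y.
Proof.
  intros Hy.
  assert (0 <= Ef y - exp (- y ^ 2) * qL y); [|lra].
  apply (mono_lim_p' (fun x => Ef x - exp (- x ^ 2) * qL x)
          (fun x => - exp (- x ^ 2) * (105 / 16 * (/ x) ^ 8)) y).
  - intros x Hx. unfold qL, qU. auto_derive.
    + repeat split; try (apply Ef_ex); lra.
    + replace (Derive (fun x : R => Ef x) x) with (- gs x) by (symmetry; apply is_derive_unique; apply Ef_deriv).
      unfold gs. replace (x * (x * 1)) with (x ^ 2) by ring. field. lra.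
  - intros x Hx. assert (0 <= exp (- x ^ 2) * (105 / 16 * (/ x) ^ 8)); [|lra]. apply Rmult_le_pos. left; apply exp_pos.
    apply Rmult_le_pos. lra. apply pow_le. left; apply Rinv_0_lt_compat; lra.
  - replace 0 with (0 - 0) by ring. apply (lim_minus Ef (fun x => exp (- x ^ 2) * qL x)).
    apply Ef_lim_p. apply K_lim, qL_bound.
Qed.

Definition PP (y : R) : R := 2 * y * exp (y ^ 2) * Ef y.

Definition pU (s : R) : R := 1 - s ^ 2 / 2 + 3 * s ^ 4 / 4.
Definition pL (s : R) : R := pU s - 15 * s ^ 6 / 8.

Lemma PP_bounds (y : R) : 1 <= y -> pL (/ y) <= PP y <= pU (/ y).
Proof.
  intros Hy. pose proof (Ef_upper y Hy). pose proof (Ef_lower y Hy).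
  assert (E1 : exp (y ^ 2) * exp (- y ^ 2) = 1) by (rewrite <- exp_plus; replace (y ^ 2 + - y ^ 2) with 0 by ring; apply exp_0).
  assert (Hp : 0 < 2 * y * exp (y ^ 2)) by (pose proof (exp_pos (y ^ 2)); nra).
  unfold PP. split.
  - apply Rle_trans with (2 * y * exp (y ^ 2) * (exp (- y ^ 2) * qL y)).
    + unfold pL, pU, qL, qU. replace (2 * y * exp (y ^ 2) * (exp (- y ^ 2) * (/ y / 2 - (/ y) ^ 3 / 4 + 3 * (/ y) ^ 5 / 8 - 15 * (/ y) ^ 7 / 16)))
        with ((exp (y ^ 2) * exp (- y ^ 2)) * (2 * y * (/ y / 2 - (/ y) ^ 3 / 4 + 3 * (/ y) ^ 5 / 8 - 15 * (/ y) ^ 7 / 16))) by ring.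
      rewrite E1. right. field. lra.
    + apply Rmult_le_compat_l; lra.
  - apply Rle_trans with (2 * y * exp (y ^ 2) * (exp (- y ^ 2) * qU y)).
    + apply Rmult_le_compat_l; lra.
    + unfold pU, qU. replace (2 * y * exp (y ^ 2) * (exp (- y ^ 2) * (/ y / 2 - (/ y) ^ 3 / 4 + 3 * (/ y) ^ 5 / 8)))
        with ((exp (y ^ 2) * exp (- y ^ 2)) * (2 * y * (/ y / 2 - (/ y) ^ 3 / 4 + 3 * (/ y) ^ 5 / 8))) by ring.
      rewrite E1. right. field. lra.
Qed.

Lemma gg_PP (y : R) : 1 <= y -> gg y = y / PP y.
Proof.
  intros Hy. unfold gg, PP, gs. pose proof (Ef_pos y).
  assert (E1 : exp (y ^ 2) * exp (- y ^ 2) = 1) by (rewrite <- exp_plus; replace (y ^ 2 + - y ^ 2) with 0 by ring; apply exp_0).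
  pose proof (exp_pos (y ^ 2)).
  rewrite exp_Ropp. field. repeat split; lra.
Qed.

Section Poly.
Variable s P : R.
Hypothesis Hs : 0 < s <= 1 / 2.
Hypothesis HP : pL s <= P <= pU s.

Let t := s ^ 2.
Let Ht : 0 < t <= 1 / 4.
Proof. unfold t. split. apply pow_lt; lra. simpl. nra. Qed.

Lemma P_half : 1 / 2 <= P.
Proof. unfold pL, pU in HP. pose proof Ht. unfold t in H.
  replace (s ^ 4) with (t * t) in HP by (unfold t; ring). replace (s ^ 6) with (t * t * t) in HP by (unfold t; ring).
  replace (s ^ 2) with t in HP by (unfold t; ring). nra. Qed.

Lemma poly_a : Rabs (1 - P * (1 + s ^ 2 / 2)) <= s ^ 4.
Proof. unfold pL, pU in HP. pose proof Ht.
  replace (s ^ 4) with (t * t) in * by (unfold t; ring). replace (s ^ 6) with (t * t * t) in HP by (unfold t; ring).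
  replace (s ^ 2) with t in * by (unfold t; ring). apply Rabs_le. split; nra. Qed.

Lemma poly_b : Rabs (1 - P * (1 + s ^ 2 / 2 - s ^ 4 / 2)) <= 2 * s ^ 6.
Proof. unfold pL, pU in HP. pose proof Ht.
  replace (s ^ 4) with (t * t) in * by (unfold t; ring). replace (s ^ 6) with (t * t * t) in * by (unfold t; ring).
  replace (s ^ 2) with t in * by (unfold t; ring).
  set (c := 1 + t / 2 - t * t / 2).
  assert (hc : 0 < c) by (unfold c; nra).
  assert (h1 : 0 <= (1 - t / 2 + 3 * (t * t) / 4 - P) * c) by (apply Rmult_le_pos; lra).
  assert (h2 : 0 <= (P - (1 - t / 2 + 3 * (t * t) / 4 - 15 * (t * t * t) / 8)) * c) by (apply Rmult_le_pos; lra).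
  assert (h3 : 0 < t * t * t) by (apply Rmult_lt_0_compat; nra).
  assert (h4 : 10 / 8 + 3 * t / 8 + 15 * t / 16 - 15 * (t * t) / 16 <= 2) by nra.
  assert (h5 : 1 - (1 - t / 2 + 3 * (t * t) / 4 - 15 * (t * t * t) / 8) * c = t * t * t * (10 / 8 + 3 * t / 8 + 15 * t / 16 - 15 * (t * t) / 16)) by (unfold c; field).
  assert (h6 : 1 - (1 - t / 2 + 3 * (t * t) / 4) * c = t * t * t * (- 5 / 8 + 3 * t / 8)) by (unfold c; field).
  apply Rabs_le. split; nra. Qed.

Lemma poly_c : Rabs (1 - P) <= s ^ 2.
Proof. unfold pL, pU in HP. pose proof Ht.
  replace (s ^ 4) with (t * t) in * by (unfold t; ring). replace (s ^ 6) with (t * t * t) in * by (unfold t; ring).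
  replace (s ^ 2) with t in * by (unfold t; ring). apply Rabs_le. split; nra. Qed.

Lemma poly_d : Rabs (2 - P * (2 + s ^ 2)) <= 2 * s ^ 4.
Proof. unfold pL, pU in HP. pose proof Ht.
  replace (s ^ 4) with (t * t) in * by (unfold t; ring). replace (s ^ 6) with (t * t * t) in * by (unfold t; ring).
  replace (s ^ 2) with t in * by (unfold t; ring). apply Rabs_le. split; nra. Qed.
End Poly.

Lemma div_bound N D B d : Rabs N <= B -> 0 < d <= D -> Rabs (N / D) <= B / d.
Proof.
  intros H1 H2. unfold Rdiv. rewrite Rabs_mult, Rabs_inv, (Rabs_pos_eq D) by lra.
  pose proof (Rabs_pos N). apply Rmult_le_compat; auto.
  left; apply Rinv_0_lt_compat; lra. apply Rinv_le_contravar; lra.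
Qed.

Lemma s_facts (y : R) : 2 <= y -> 0 < / y <= 1 / 2.
Proof. intros Hy. split. apply Rinv_0_lt_compat; lra.
  unfold Rdiv. rewrite Rmult_1_l. apply Rinv_le_contravar; lra. Qed.

Ltac getP y Hy :=
  let HP := fresh "HP" in let Hs := fresh "Hs" in let Hh := fresh "Hh" in
  pose proof (PP_bounds y ltac:(lra)) as HP; pose proof (s_facts y Hy) as Hs;
  pose proof (P_half (/ y) (PP y) Hs HP) as Hh;
  rewrite (gg_PP y) by lra.

Lemma fIr_bound (y : R) : 2 <= y -> Rabs (y * gg y - (y ^ 2 + 1 / 2)) <= 2 / (y * y).
Proof.
  intros Hy. getP y Hy.
  replace (y * (y / PP y) - (y ^ 2 + 1 / 2)) with ((1 - PP y * (1 + (/ y) ^ 2 / 2)) / ((/ y) ^ 2 * PP y))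
    by (field; lra).
  replace (2 / (y * y)) with ((/ y) ^ 4 / ((/ y) ^ 2 * (1 / 2))) by (field; lra).
  apply div_bound. apply poly_a; auto.
  split. apply Rmult_lt_0_compat. apply pow_lt; lra. lra.
  apply Rmult_le_compat_l. apply pow_le; lra. lra.
Qed.

Lemma fI2r_bound (y : R) : 2 <= y -> Rabs (y ^ 3 * gg y - (y ^ 4 + y ^ 2 / 2 - 1 / 2)) <= 4 / (y * y).
Proof.
  intros Hy. getP y Hy.
  replace (y ^ 3 * (y / PP y) - (y ^ 4 + y ^ 2 / 2 - 1 / 2)) with ((1 - PP y * (1 + (/ y) ^ 2 / 2 - (/ y) ^ 4 / 2)) / ((/ y) ^ 4 * PP y))
    by (field; lra).
  replace (4 / (y * y)) with (2 * (/ y) ^ 6 / ((/ y) ^ 4 * (1 / 2))) by (field; lra).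
  apply div_bound. apply poly_b; auto.
  split. apply Rmult_lt_0_compat. apply pow_lt; lra. lra.
  apply Rmult_le_compat_l. apply pow_le; lra. lra.
Qed.

Lemma gg_minus_y (y : R) : 2 <= y -> Rabs (gg y - y) <= 2 / y.
Proof.
  intros Hy. getP y Hy.
  replace (y / PP y - y) with ((1 - PP y) / (/ y * PP y)) by (field; lra).
  replace (2 / y) with ((/ y) ^ 2 / (/ y * (1 / 2))) by (field; lra).
  apply div_bound. apply poly_c; auto.
  split. apply Rmult_lt_0_compat; lra.
  apply Rmult_le_compat_l; lra.
Qed.

Lemma y2gg_bound (y : R) : 2 <= y -> Rabs (y ^ 2 * gg y / 2 - (y ^ 3 / 2 + y / 4)) <= 1 / y.
Proof.
  intros Hy. getP y Hy.
  replace (y ^ 2 * (y / PP y) / 2 - (y ^ 3 / 2 + y / 4)) with ((2 - PP y * (2 + (/ y) ^ 2)) / (4 * (/ y) ^ 3 * PP y))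
    by (field; lra).
  replace (1 / y) with (2 * (/ y) ^ 4 / (4 * (/ y) ^ 3 * (1 / 2))) by (field; lra).
  apply div_bound. apply poly_d; auto.
  split. apply Rmult_lt_0_compat. apply Rmult_lt_0_compat. lra. apply pow_lt; lra. lra.
  apply Rmult_le_compat_l. apply Rmult_le_pos. lra. apply pow_le; lra. lra.
Qed.

Lemma PP_minus_1 (y : R) : 2 <= y -> Rabs (PP y - 1) <= 1 / y.
Proof.
  intros Hy. pose proof (PP_bounds y ltac:(lra)) as HP; pose proof (s_facts y Hy) as Hs.
  pose proof (poly_c (/ y) (PP y) Hs HP). rewrite Rabs_minus_sym.
  eapply Rle_trans. apply H. replace (1 / y) with (/ y) by (field; lra). simpl. nra.
Qed.

Lemma lim_const {F : (R -> Prop) -> Prop} {FF : Filter F} (c : R) :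
  filterlim (fun _ => c) F (locally c).
Proof. apply filterlim_const. Qed.

Lemma RInt_anti (f F : R -> R) a b : a <= b -> (forall x, a <= x <= b -> is_derive F x (f x)) ->
  (forall x, a <= x <= b -> continuous f x) -> ex_RInt f a b /\ RInt f a b = F b - F a.
Proof.
  intros Hab Hd Hc.
  assert (H : is_RInt f a b (minus (F b) (F a))).
  { apply (is_RInt_derive (V:=R_CompleteNormedModule)).
    - intros x Hx. rewrite Rmin_left in Hx by lra. rewrite Rmax_right in Hx by lra. apply Hd; lra.
    - intros x Hx. rewrite Rmin_left in Hx by lra. rewrite Rmax_right in Hx by lra. apply Hc; lra. }
  split. eexists; eauto. apply (is_RInt_unique (V:=R_CompleteNormedModule)) in H. rewrite H. reflexivity.
Qed.

Lemma anti_p (f F : R -> R) a L : (forall x, a <= x -> is_derive F x (f x)) ->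
  (forall x, a <= x -> continuous f x) -> filterlim F (Rbar_locally p_infty) (locally L) ->
  is_RInt_gen f (at_point a) (Rbar_locally p_infty) (L - F a).
Proof.
  intros Hd Hc Hl. apply L1p.
  - intros b Hb. apply (RInt_anti f F a b Hb); intros; [apply Hd|apply Hc]; lra.
  - apply (lim_ext_loc (fun b => F b - F a)).
    + exists a. intros b Hb. symmetry. apply (RInt_anti f F a b); try lra; intros; [apply Hd|apply Hc]; lra.
    + apply lim_minus; auto. apply lim_const.
Qed.

Lemma anti_m (f F : R -> R) a L : (forall x, x <= a -> is_derive F x (f x)) ->
  (forall x, x <= a -> continuous f x) -> filterlim F (Rbar_locally m_infty) (locally L) ->
  is_RInt_gen f (Rbar_locally m_infty) (at_point a) (F a - L).
Proof.
  intros Hd Hc Hl. apply L1m.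
  - intros b Hb. apply (RInt_anti f F b a Hb); intros; [apply Hd|apply Hc]; lra.
  - apply (lim_ext_loc (fun b => F a - F b)).
    + exists a. intros b Hb. symmetry. apply (RInt_anti f F b a); try lra; intros; [apply Hd|apply Hc]; lra.
    + apply lim_minus; auto. apply lim_const.
Qed.

Lemma cmp_gen_p (f h H : R -> R) a c L : (forall x, continuous f x) ->
  (forall x, a <= x -> is_derive H x (h x)) -> (forall x, a <= x -> continuous h x) ->
  (forall x, a <= x -> Rabs (f x) <= h x) -> filterlim H (Rbar_locally p_infty) (locally L) ->
  exists l, is_RInt_gen f (at_point c) (Rbar_locally p_infty) l.
Proof.
  intros Cf Hd Ch Hb Hl.
  destruct (cmp_p f h a Cf Ch Hb) as [l Hfl].
  { exists (L - H a). apply (lim_ext_loc (fun b => H b - H a)).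
    + exists a. intros b Hb'. symmetry. apply (RInt_anti h H a b); try lra; intros; [apply Hd|apply Ch]; lra.
    + apply lim_minus; auto. apply lim_const. }
  exists (RInt f c a + l). apply L1p.
  - intros; apply cont_exRInt; auto.
  - apply (lim_ext_loc (fun b => RInt f c a + RInt f a b)).
    + apply filter_forall. intros b. apply RInt_ChaslesR; apply cont_exRInt; auto.
    + apply lim_plus; auto. apply lim_const.
Qed.

Lemma cmp_gen_m (f h H : R -> R) a c L : (forall x, continuous f x) ->
  (forall x, x <= a -> is_derive H x (h x)) -> (forall x, x <= a -> continuous h x) ->
  (forall x, x <= a -> Rabs (f x) <= h x) -> filterlim H (Rbar_locally m_infty) (locally L) ->
  exists l, is_RInt_gen f (Rbar_locally m_infty) (at_point c) l.
Proof.
  intros Cf Hd Ch Hb Hl.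
  destruct (cmp_m f h a Cf Ch Hb) as [l Hfl].
  { exists (H a - L). apply (lim_ext_loc (fun b => H a - H b)).
    + exists a. intros b Hb'. symmetry. apply (RInt_anti h H b a); try lra; intros; [apply Hd|apply Ch]; lra.
    + apply lim_minus; auto. apply lim_const. }
  exists (l + RInt f a c). apply L1m.
  - intros; apply cont_exRInt; auto.
  - apply (lim_ext_loc (fun b => RInt f b a + RInt f a c)).
    + apply filter_forall. intros b. apply RInt_ChaslesR; apply cont_exRInt; auto.
    + apply lim_plus; auto. apply lim_const.
Qed.

Lemma gen_lin {Fa Fb : (R -> Prop) -> Prop} {FFa : Filter Fa} {FFb : Filter Fb}
  (f1 f2 : R -> R) l1 l2 k :
  is_RInt_gen f1 Fa Fb l1 -> is_RInt_gen f2 Fa Fb l2 ->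
  is_RInt_gen (fun x => f1 x + k * f2 x) Fa Fb (l1 + k * l2).
Proof.
  intros H1 H2.
  exact (is_RInt_gen_plus (V:=R_NormedModule) f1 (fun x => scal k (f2 x)) l1 (scal k l2) H1
          (is_RInt_gen_scal (V:=R_NormedModule) f2 k l2 H2)).
Qed.

Lemma gen_ext {Fa Fb : (R -> Prop) -> Prop} {FFa : Filter Fa} {FFb : Filter Fb}
  (f g : R -> R) l : (forall x, f x = g x) -> is_RInt_gen f Fa Fb l -> is_RInt_gen g Fa Fb l.
Proof.
  intros He H. apply (is_RInt_gen_ext (V:=R_NormedModule) f g l); auto.
  apply filter_forall. intros; apply He.
Qed.

Ltac contac := apply exd_cont; auto_derive; repeat split; try apply gg_ex; try apply Ef_ex; auto.

Definition fIr (y : R) : R := y * gg y - (y ^ 2 + 1 / 2).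
Definition fI2r (y : R) : R := y ^ 3 * gg y - (y ^ 4 + y ^ 2 / 2 - 1 / 2).
Definition fI1r (y : R) : R := gg y - (y + y / (2 * (1 + y ^ 2))).
Definition fI3r (y : R) : R := gg y ^ 2 - (y ^ 2 + 1).
Definition fI4r (y : R) : R := (y * gg y) ^ 2 - (y ^ 4 + y ^ 2 - 3 / 4).

Lemma inv_lim_p (C : R) : filterlim (fun x => - C / x) (Rbar_locally p_infty) (locally 0).
Proof.
  apply lim0_p. exists 0, (Rabs C). intros x Hx. rewrite Rminus_0_r.
  unfold Rdiv. rewrite Rabs_mult, Rabs_Ropp, Rabs_inv, (Rabs_pos_eq x) by lra. lra.
Qed.

Lemma fIr_ex : exists A, is_RInt_gen fIr (at_point 0) (Rbar_locally p_infty) A.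
Proof.
  apply (cmp_gen_p fIr (fun x => 2 / (x * x)) (fun x => - 2 / x) 2 0 0).
  - intros x. unfold fIr. contac.
  - intros x Hx. auto_derive. lra. field. lra.
  - intros x Hx. contac. nra.
  - intros x Hx. apply fIr_bound; auto.
  - apply inv_lim_p.
Qed.

Lemma fI2r_ex : exists B, is_RInt_gen fI2r (at_point 0) (Rbar_locally p_infty) B.
Proof.
  apply (cmp_gen_p fI2r (fun x => 4 / (x * x)) (fun x => - 4 / x) 2 0 0).
  - intros x. unfold fI2r. contac.
  - intros x Hx. auto_derive. lra. field. lra.
  - intros x Hx. contac. nra.
  - intros x Hx. apply fI2r_bound; auto.
  - apply inv_lim_p.
Qed.

Ltac rwD := repeat match goal with
  | |- context [Derive (fun x : R => gg x) ?y] =>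
      replace (Derive (fun x : R => gg x) y) with (-2 * y * gg y + 2 * gg y ^ 2)
        by (symmetry; apply is_derive_unique; apply gg_deriv)
  | |- context [Derive (fun x : R => Ef x) ?y] =>
      replace (Derive (fun x : R => Ef x) y) with (- gs y)
        by (symmetry; apply is_derive_unique; apply Ef_deriv)
  end.

Definition Kf (y : R) : R := gg y - y.
Definition dK (y : R) : R := -2 * y * gg y + 2 * gg y ^ 2 - 1.

Lemma Kf_lim : filterlim Kf (Rbar_locally p_infty) (locally 0).
Proof.
  apply lim0_p. exists 2, 2. intros x Hx. rewrite Rminus_0_r. apply gg_minus_y. lra.
Qed.

Lemma fI3r_gen A : is_RInt_gen fIr (at_point 0) (Rbar_locally p_infty) A ->
  is_RInt_gen fI3r (at_point 0) (Rbar_locally p_infty) (A + 1 / 2 * (0 - Kf 0)).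
Proof.
  intros HA. apply (gen_ext (fun x => fIr x + 1 / 2 * dK x)).
  { intros x. unfold fIr, dK, fI3r. field. }
  apply gen_lin; auto.
  apply anti_p.
  - intros x _. unfold Kf, dK. auto_derive. apply gg_ex. rwD. ring.
  - intros x _. unfold dK. contac.
  - apply Kf_lim.
Qed.

Definition Mf (y : R) : R := y ^ 2 * gg y - y ^ 3 - y / 2.
Definition dM (y : R) : R := 2 * y * gg y + y ^ 2 * (-2 * y * gg y + 2 * gg y ^ 2) - 3 * y ^ 2 - 1 / 2.

Lemma Mf_lim : filterlim Mf (Rbar_locally p_infty) (locally 0).
Proof.
  apply lim0_p. exists 2, 2. intros x Hx. rewrite Rminus_0_r.
  pose proof (y2gg_bound x ltac:(lra)).
  replace (Mf x) with (2 * (x ^ 2 * gg x / 2 - (x ^ 3 / 2 + x / 4))) by (unfold Mf; field).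
  rewrite Rabs_mult, Rabs_pos_eq by lra.
  replace (2 / x) with (2 * (1 / x)) by (field; lra). lra.
Qed.

Lemma fI4r_gen A B : is_RInt_gen fIr (at_point 0) (Rbar_locally p_infty) A ->
  is_RInt_gen fI2r (at_point 0) (Rbar_locally p_infty) B ->
  is_RInt_gen fI4r (at_point 0) (Rbar_locally p_infty) (B + -1 * A + 1 / 2 * (0 - Mf 0)).
Proof.
  intros HA HB. apply (gen_ext (fun x => (fI2r x + -1 * fIr x) + 1 / 2 * dM x)).
  { intros x. unfold fIr, fI2r, dM, fI4r. field. }
  apply gen_lin; [apply gen_lin; auto|].
  apply anti_p.
  - intros x _. unfold Mf, dM. auto_derive. apply gg_ex. rwD. field.
  - intros x _. unfold dM. contac.
  - apply Mf_lim.
Qed.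

Definition F1 (y : R) : R := - (1 / 2) * ln (Ef y) - y ^ 2 / 2 - ln (1 + y ^ 2) / 4.

Lemma ln_cont (c : R) : 0 < c -> continuous ln c.
Proof. intros Hc. apply exd_cont. auto_derive. auto. Qed.

Lemma PP_lim : filterlim PP (Rbar_locally p_infty) (locally 1).
Proof. apply lim0_p. exists 2, 1. intros x Hx. apply PP_minus_1. lra. Qed.

Lemma ratio_lim : filterlim (fun x => 4 * x ^ 2 / (1 + x ^ 2)) (Rbar_locally p_infty) (locally 4).
Proof.
  apply lim0_p. exists 1, 4. intros x Hx.
  replace (4 * x ^ 2 / (1 + x ^ 2) - 4) with (- (4 / (1 + x ^ 2))) by (field; nra).
  rewrite Rabs_Ropp, Rabs_pos_eq by (apply Rdiv_le_0_compat; nra).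
  unfold Rdiv. apply Rmult_le_compat_l. lra. apply Rinv_le_contravar; nra.
Qed.

Lemma F1_lim : filterlim F1 (Rbar_locally p_infty) (locally (ln 2 / 2)).
Proof.
  apply (lim_ext_loc (fun x => - (1 / 2) * ln (PP x) + 1 / 4 * ln (4 * x ^ 2 / (1 + x ^ 2)))).
  - exists 1. intros x Hx. unfold F1.
    pose proof (Ef_pos x). pose proof (exp_pos (x ^ 2)).
    assert (HPP : 0 < PP x) by (unfold PP; apply Rmult_lt_0_compat; [apply Rmult_lt_0_compat|]; nra).
    assert (E1 : Ef x = PP x / (2 * x * exp (x ^ 2))) by (unfold PP; field; lra).
    assert (L1 : ln (PP x / (2 * x * exp (x ^ 2))) = ln (PP x) - ln (2 * x) - x ^ 2).
    { rewrite ln_div by nra. rewrite ln_mult by nra. rewrite ln_exp. ring. }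
    assert (L2 : ln (4 * x ^ 2 / (1 + x ^ 2)) = 2 * ln (2 * x) - ln (1 + x ^ 2)).
    { rewrite ln_div by nra. replace (4 * x ^ 2) with ((2 * x) * (2 * x)) by ring.
      rewrite ln_mult by nra. ring. }
    rewrite E1, L1, L2. field.
  - replace (ln 2 / 2) with (- (1 / 2) * ln 1 + 1 / 4 * ln 4).
    2:{ rewrite ln_1. replace 4 with (2 * 2) by ring. rewrite ln_mult by lra. field. }
    apply lim_plus; apply lim_scal.
    + apply (lim_comp_cont PP ln 1). apply PP_lim. apply ln_cont; lra.
    + apply (lim_comp_cont (fun x => 4 * x ^ 2 / (1 + x ^ 2)) ln 4). apply ratio_lim. apply ln_cont; lra.
Qed.

Lemma fI1r_gen : is_RInt_gen fI1r (at_point 0) (Rbar_locally p_infty) (ln 2 / 2 - F1 0).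
Proof.
  apply anti_p.
  - intros x _. unfold F1, fI1r. auto_derive.
    + repeat split; try apply Ef_ex; try apply Ef_pos; nra.
    + rwD. unfold gg. pose proof (Ef_pos x). field. nra.
  - intros x _. unfold fI1r. contac. nra.
  - apply F1_lim.
Qed.

Definition fIl (y : R) : R := y * gg y.
Definition fI2l (y : R) : R := y ^ 3 * gg y.
Definition fI3l (y : R) : R := gg y ^ 2.
Definition fI4l (y : R) : R := (y * gg y) ^ 2.

Lemma gs_m_bound (x : R) : x <= -1 -> (x ^ 2 + 1) * gs x <= 2 / (- x).
Proof.
  intros Hx. unfold gs. rewrite exp_Ropp.
  assert (H1 : (1 + x ^ 2 / 2) * (1 + x ^ 2 / 2) <= exp (x ^ 2)).
  { replace (x ^ 2) with (x ^ 2 / 2 + x ^ 2 / 2) at 3 by field. rewrite exp_plus.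
    pose proof (exp_ineq1_le (x ^ 2 / 2)). apply Rmult_le_compat; nra. }
  assert (H2 : 0 < (1 + x ^ 2 / 2)) by nra.
  apply Rle_trans with ((x ^ 2 + 1) / ((1 + x ^ 2 / 2) * (1 + x ^ 2 / 2))).
  { unfold Rdiv. apply Rmult_le_compat_l. nra. apply Rinv_le_contravar; nra. }
  replace ((x ^ 2 + 1) / ((1 + x ^ 2 / 2) * (1 + x ^ 2 / 2))) with (2 / (1 + x ^ 2 / 2) * ((x ^ 2 + 1) / (2 + x ^ 2))) by (field; nra).
  apply Rle_trans with (2 / (1 + x ^ 2 / 2)).
  { rewrite <- (Rmult_1_r (2 / (1 + x ^ 2 / 2))) at 2. apply Rmult_le_compat_l.
    apply Rdiv_le_0_compat; lra. apply Rmult_le_reg_r with (2 + x ^ 2). nra.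
    unfold Rdiv. rewrite Rmult_assoc, Rinv_l by nra. nra. }
  unfold Rdiv. apply Rmult_le_compat_l. lra. apply Rinv_le_contravar; nra.
Qed.

Ltac sqfix := repeat match goal with |- context [?x * (?x * 1)] => replace (x * (x * 1)) with (x ^ 2) by ring end.

Lemma gs_ge0 x : 0 <= gs x. Proof. left; apply gs_pos. Qed.

Lemma lim_m_from (u : R -> R) (C : R) : (forall x, x <= -1 -> Rabs (u x) <= C * ((x ^ 2 + 1) * gs x)) ->
  0 <= C -> filterlim u (Rbar_locally m_infty) (locally 0).
Proof.
  intros H HC. apply lim0_m. exists (-1), (C * 2). intros x Hx. rewrite Rminus_0_r.
  eapply Rle_trans. apply H; lra. unfold Rdiv. rewrite Rmult_assoc. apply Rmult_le_compat_l; auto.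
  apply gs_m_bound; lra.
Qed.

Lemma fIl_ex : exists A, is_RInt_gen fIl (Rbar_locally m_infty) (at_point 0) A.
Proof.
  pose proof S0_pos.
  apply (cmp_gen_m fIl (fun x => - x * gs x / (2 * S0)) (fun x => gs x / (4 * S0)) 0 0 0).
  - intros x. unfold fIl. contac.
  - intros x Hx. unfold gs. auto_derive. auto. sqfix. field. lra.
  - intros x Hx. unfold gs. contac; try lra.
  - intros x Hx. unfold fIl. rewrite Rabs_mult, Rabs_left1, Rabs_pos_eq by (first [lra | left; apply gg_pos]).
    replace (- x * gs x / (2 * S0)) with (- x * (gs x / (2 * S0))) by (field; lra).
    apply Rmult_le_compat_l. lra. apply gg_left; auto.
  - apply (lim_m_from _ (/ (4 * S0))).
    + intros x Hx. rewrite Rabs_pos_eq. 2:{ apply Rdiv_le_0_compat. apply gs_ge0. lra. }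
      pose proof (gs_ge0 x). unfold Rdiv. rewrite Rmult_comm. apply Rmult_le_compat_l.
      left; apply Rinv_0_lt_compat; lra. nra.
    + left; apply Rinv_0_lt_compat; lra.
Qed.

Lemma fI2l_ex : exists B, is_RInt_gen fI2l (Rbar_locally m_infty) (at_point 0) B.
Proof.
  pose proof S0_pos.
  apply (cmp_gen_m fI2l (fun x => - x ^ 3 * gs x / (2 * S0)) (fun x => (x ^ 2 + 1) * gs x / (4 * S0)) 0 0 0).
  - intros x. unfold fI2l. contac.
  - intros x Hx. unfold gs. auto_derive. auto. sqfix. field. lra.
  - intros x Hx. unfold gs. contac; try lra.
  - intros x Hx. unfold fI2l. assert (x ^ 3 <= 0) by (simpl; nra).
    rewrite Rabs_mult, Rabs_left1, Rabs_pos_eq by (first [lra | left; apply gg_pos]).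
    replace (- x ^ 3 * gs x / (2 * S0)) with (- x ^ 3 * (gs x / (2 * S0))) by (field; lra).
    apply Rmult_le_compat_l. lra. apply gg_left; auto.
  - apply (lim_m_from _ (/ (4 * S0))).
    + intros x Hx. pose proof (gs_ge0 x). rewrite Rabs_pos_eq.
      2:{ apply Rdiv_le_0_compat. apply Rmult_le_pos; nra. lra. }
      right. field. lra.
    + left; apply Rinv_0_lt_compat; lra.
Qed.

Lemma gg_lim_m : filterlim gg (Rbar_locally m_infty) (locally 0).
Proof.
  pose proof S0_pos. apply (lim_m_from _ (/ (2 * S0))).
  - intros x Hx. rewrite Rabs_pos_eq by (left; apply gg_pos). eapply Rle_trans. apply gg_left. lra.
    pose proof (gs_ge0 x). unfold Rdiv. rewrite Rmult_comm. apply Rmult_le_compat_l.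
    left; apply Rinv_0_lt_compat; lra. nra.
  - left; apply Rinv_0_lt_compat; lra.
Qed.

Definition FL (y : R) : R := - (1 / 2) * ln (Ef y).

Lemma fI1l_gen : is_RInt_gen gg (Rbar_locally m_infty) (at_point 0) (FL 0 - (- (1 / 2) * ln (2 * S0))).
Proof.
  pose proof S0_pos. apply anti_m.
  - intros x _. unfold FL. auto_derive.
    + split. apply Ef_ex. split; auto. apply Ef_pos.
    + rwD. unfold gg. pose proof (Ef_pos x). field. lra.
  - intros x _. apply gg_cont.
  - apply lim_scal. apply (lim_comp_cont Ef ln (2 * S0)). apply Ef_lim_m. apply ln_cont; lra.
Qed.

Lemma fI3l_gen A : is_RInt_gen fIl (Rbar_locally m_infty) (at_point 0) A ->
  is_RInt_gen fI3l (Rbar_locally m_infty) (at_point 0) (A + 1 / 2 * (gg 0 - 0)).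
Proof.
  intros HA. apply (gen_ext (fun x => fIl x + 1 / 2 * (-2 * x * gg x + 2 * gg x ^ 2))).
  { intros x. unfold fIl, fI3l. field. }
  apply gen_lin; auto.
  apply anti_m.
  - intros x _. apply gg_deriv.
  - intros x _. contac.
  - apply gg_lim_m.
Qed.

Definition Nf (y : R) : R := y ^ 2 * gg y.

Lemma fI4l_gen A B : is_RInt_gen fIl (Rbar_locally m_infty) (at_point 0) A ->
  is_RInt_gen fI2l (Rbar_locally m_infty) (at_point 0) B ->
  is_RInt_gen fI4l (Rbar_locally m_infty) (at_point 0) (B + -1 * A + 1 / 2 * (Nf 0 - 0)).
Proof.
  intros HA HB. pose proof S0_pos.
  apply (gen_ext (fun x => (fI2l x + -1 * fIl x) + 1 / 2 * (2 * x * gg x + x ^ 2 * (-2 * x * gg x + 2 * gg x ^ 2)))).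
  { intros x. unfold fIl, fI2l, fI4l. field. }
  apply gen_lin; [apply gen_lin; auto|].
  apply anti_m.
  - intros x _. unfold Nf. auto_derive. apply gg_ex. rwD. ring.
  - intros x _. contac.
  - apply (lim_m_from _ (/ (2 * S0))).
    + intros x Hx. unfold Nf. rewrite Rabs_mult, Rabs_pos_eq, (Rabs_pos_eq (gg x)) by (first [nra | left; apply gg_pos]).
      pose proof (gg_left x ltac:(lra)). pose proof (gs_ge0 x). pose proof (gg_pos x).
      apply Rle_trans with ((x ^ 2 + 1) * (gs x / (2 * S0))).
      apply Rmult_le_compat; nra.
      right. field. lra.
    + left; apply Rinv_0_lt_compat; lra.
Qed.

Lemma chi_neg x : x < 0 -> chi_pos x = 0.
Proof. intros H. unfold chi_pos. destruct (Rlt_dec 0 x); lra. Qed.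
Lemma chi_posv x : 0 < x -> chi_pos x = 1.
Proof. intros H. unfold chi_pos. destruct (Rlt_dec 0 x); lra. Qed.

Lemma ext_left (f1 f2 : R -> R) l : (forall x, x < 0 -> f1 x = f2 x) ->
  is_RInt_gen f1 (Rbar_locally m_infty) (at_point 0) l -> is_RInt_gen f2 (Rbar_locally m_infty) (at_point 0) l.
Proof.
  intros He H. apply (is_RInt_gen_ext (V:=R_NormedModule) f1 f2 l); auto.
  apply Filter_prod with (Q := fun a => a < 0) (R := fun b => b = 0).
  - exists 0. auto.
  - reflexivity.
  - intros a b Ha -> x Hx. simpl in Hx. rewrite Rmin_left, Rmax_right in Hx by lra. apply He. lra.
Qed.

Lemma ext_right (f1 f2 : R -> R) l : (forall x, 0 < x -> f1 x = f2 x) ->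
  is_RInt_gen f1 (at_point 0) (Rbar_locally p_infty) l -> is_RInt_gen f2 (at_point 0) (Rbar_locally p_infty) l.
Proof.
  intros He H. apply (is_RInt_gen_ext (V:=R_NormedModule) f1 f2 l); auto.
  apply Filter_prod with (Q := fun a => a = 0) (R := fun b => 0 < b).
  - reflexivity.
  - exists 0. auto.
  - intros a b -> Hb x Hx. simpl in Hx. rewrite Rmin_left, Rmax_right in Hx by lra. apply He. lra.
Qed.

Lemma whole (f : R -> R) fl fr l1 l2 :
  (forall x, x < 0 -> fl x = f x) -> (forall x, 0 < x -> fr x = f x) ->
  is_RInt_gen fl (Rbar_locally m_infty) (at_point 0) l1 ->
  is_RInt_gen fr (at_point 0) (Rbar_locally p_infty) l2 ->
  whole_line f /\ int_R f = l1 + l2.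
Proof.
  intros Hl Hr H1 H2.
  assert (H : is_RInt_gen f (Rbar_locally m_infty) (Rbar_locally p_infty) (plus l1 l2)).
  { apply (is_RInt_gen_Chasles (V:=R_NormedModule) f 0 l1 l2).
    apply (ext_left fl); auto. apply (ext_right fr); auto. }
  split.
  - eexists. exact H.
  - unfold int_R. apply (is_RInt_gen_unique (V:=R_CompleteNormedModule) f (plus l1 l2)) in H.
    exact H.
Qed.

Theorem lemma2p10 :
  whole_line fI /\ whole_line fI1 /\ whole_line fI2 /\ whole_line fI3 /\ whole_line fI4 /\
  I1 = ln (2 * sqrt PI) / 2 /\ I3 = I /\ I4 = I2 - I /\
  (forall b rho T1 T2 Omega : R, 0 < b -> 0 < rho -> Omega <> 0 ->
     sqrt 2 * b * Rpower rho b * ((Rpower rho (2 * b) * T2 - 5 * T1) / Omega) * I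
     + (10 * sqrt 2 * b * Rpower rho b / 3) * (T1 / Omega) * I2
     + sqrt 2 * b * Rpower rho (2 * b) * (T1 / Omega)
         * (2 / (3 * Rpower rho b) - Rpower rho b * (T1 / Omega)) * I3
     - (10 * sqrt 2 * b * Rpower rho b / 3) * (T1 / Omega) * I4
     = sqrt 2 * I * b * Rpower rho b
         * (Rpower rho (2 * b) * (T2 / Omega) - T1 / Omega
            - Rpower rho (2 * b) * (T1 ^ 2 / Omega ^ 2))).
Proof.
  destruct fIr_ex as [A HA]. destruct fI2r_ex as [B HB].
  destruct fIl_ex as [A' HA']. destruct fI2l_ex as [B' HB'].
  assert (W : whole_line fI /\ int_R fI = A' + A).
  { apply (whole fI fIl fIr); auto.
    - intros x Hx. unfold fIl, fI. rewrite chi_neg, g_gg by lra. ring.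
    - intros x Hx. unfold fIr, fI. rewrite chi_posv, g_gg by lra. ring. }
  assert (W2 : whole_line fI2 /\ int_R fI2 = B' + B).
  { apply (whole fI2 fI2l fI2r); auto.
    - intros x Hx. unfold fI2l, fI2. rewrite chi_neg, g_gg by lra. ring.
    - intros x Hx. unfold fI2r, fI2. rewrite chi_posv, g_gg by lra. ring. }
  assert (W1 : whole_line fI1 /\ int_R fI1 = (FL 0 - (- (1 / 2) * ln (2 * S0))) + (ln 2 / 2 - F1 0)).
  { apply (whole fI1 gg fI1r); auto.
    - intros x Hx. unfold fI1. rewrite chi_neg, g_gg by lra. ring.
    - intros x Hx. unfold fI1r, fI1. rewrite chi_posv, g_gg by lra. ring.
    - apply fI1l_gen.
    - apply fI1r_gen. }
  assert (W3 : whole_line fI3 /\ int_R fI3 = (A' + 1 / 2 * (gg 0 - 0)) + (A + 1 / 2 * (0 - Kf 0))).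
  { apply (whole fI3 fI3l fI3r); auto.
    - intros x Hx. unfold fI3l, fI3. rewrite chi_neg, g_gg by lra. ring.
    - intros x Hx. unfold fI3r, fI3. rewrite chi_posv, g_gg by lra. ring.
    - apply fI3l_gen; auto.
    - apply fI3r_gen; auto. }
  assert (W4 : whole_line fI4 /\ int_R fI4 = (B' + -1 * A' + 1 / 2 * (Nf 0 - 0)) + (B + -1 * A + 1 / 2 * (0 - Mf 0))).
  { apply (whole fI4 fI4l fI4r); auto.
    - intros x Hx. unfold fI4l, fI4. rewrite chi_neg, g_gg by lra. ring.
    - intros x Hx. unfold fI4r, fI4. rewrite chi_posv, g_gg by lra. ring.
    - apply fI4l_gen; auto.
    - apply fI4r_gen; auto. }
  destruct W as [W0 EI]. destruct W1 as [W1 EI1]. destruct W2 as [W2 EI2].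
  destruct W3 as [W3 EI3]. destruct W4 as [W4 EI4].
  assert (E3 : I3 = I).
  { unfold I3, I. rewrite EI3, EI. unfold Kf. ring. }
  assert (E4 : I4 = I2 - I).
  { unfold I4, I2, I. rewrite EI4, EI2, EI. unfold Nf, Mf. field. }
  assert (E1 : I1 = ln (2 * sqrt PI) / 2).
  { unfold I1. rewrite EI1. unfold FL, F1, Ef. rewrite G0.
    pose proof S0_pos.
    replace (2 * sqrt PI) with (2 * (2 * S0)) by (unfold S0; field).
    rewrite ln_mult by lra. replace (1 + 0 ^ 2) with 1 by ring. rewrite ln_1.
    rewrite (ln_mult 2 (2 * S0)) by lra. rewrite (ln_mult 2 S0) by lra. replace (S0 - 0) with S0 by ring. field. }
  repeat split; auto.
  intros b rho T1 T2 Omega Hb Hrho HO.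
  rewrite E3, E4.
  assert (HX : Rpower rho (2 * b) = Rpower rho b * Rpower rho b).
  { replace (2 * b) with (b + b) by ring. apply Rpower_plus. }
  assert (HXp : 0 < Rpower rho b) by (unfold Rpower; apply exp_pos).
  rewrite HX. field. lra.
Qed.
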